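(* Let $n\ge0$ and $k\ge1$ be integers, $\rho\ne0$ real, $0\le q<1$, and $x,y$ complex numbers. Then $$B_{n,\rho,q}^{(k)}(x)=\sum_{l=0}^{n}\sum_{m=0}^{n}(-1)^{n-m}m!\,\rho^{n-l}S_2\!\left(n,m,\tfrac{x}{\rho}\right)S_2\!\left(m,l,\tfrac{y}{\rho}\right)c_{l,\rho,q}^{(k)}(y),$$ $$B_{n,\rho,q}^{(k)}(x)=\sum_{l=0}^{n}\sum_{m=0}^{n}(-1)^{n}m!\,\rho^{n-l}S_2\!\left(n,m,\tfrac{x}{\rho}\right)S_2\!\left(m,l,-\tfrac{y}{\rho}\right)\widehat c_{l,\rho,q}^{(k)}(y),$$ $$c_{n,\rho,q}^{(k)}(x)=\sum_{l=0}^{n}\sum_{m=0}^{n}\frac{(-1)^{n-m}}{m!}\rho^{n-l}S_1\!\left(n,m,\tfrac{x}{\rho}\right)S_1\!\left(m,l,\tfrac{y}{\rho}\right)B_{l,\rho,q}^{(k)}(y),$$ $$\widehat c_{n,\rho,q}^{(k)}(x)=\sum_{l=0}^{n}\sum_{m=0}^{n}\frac{(-1)^{n}}{m!}\rho^{n-l}S_1\!\left(n,m,-\tfrac{x}{\rho}\right)S_1\!\left(m,l,\tfrac{y}{\rho}\right)B_{l,\rho,q}^{(k)}(y).$$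
   Context: For real $0\le q<1$ (with $0^0=1$), $[x]_q=\frac{1-q^x}{1-q}$. ${\rm Li}_{k,q}(w)=\sum_{m\ge1}w^m/[m]_q^k$. The $q$-poly-Bernoulli polynomials with parameter $\rho$: $\frac{\rho}{1-e^{-\rho t}}{\rm Li}_{k,q}\left(\frac{1-e^{-\rho t}}{\rho}\right)e^{-tz}=\sum_{n\ge0} B_{n,\rho,q}^{(k)}(z)\frac{t^n}{n!}$ (formal power series in $t$). Jackson's $q$-integral: $\int_0^1 f(x)\,d_qx=(1-q)\sum_{j\ge0} f(q^j)q^j$; multiple integrals are iterated. $(x)_n=x(x-1)\cdots(x-n+1)$, $(x)_0=1$. The $q$-poly-Cauchy polynomials of the first and second kind with parameter $\rho$ are $c_{n,\rho,q}^{(k)}(z)=\rho^n\int_0^1\cdots\int_0^1\left(\frac{x_1\cdots x_k-z}{\rho}\right)_n d_qx_1\cdots d_qx_k$ and $\widehat c_{n,\rho,q}^{(k)}(z)=\rho^n\int_0^1\cdots\int_0^1\left(\frac{-x_1\cdots x_k+z}{\rho}\right)_n d_qx_1\cdots d_qx_k$ ($k$-fold). Weighted Stirling numbers (Carlitz): $\frac{(1-t)^{-x}(-\ln(1-t))^m}{m!}=\sum_{n\ge0}S_1(n,m,x)\frac{t^n}{n!}$ and $\frac{e^{xt}(e^t-1)^m}{m!}=\sum_{n\ge0}S_2(n,m,x)\frac{t^n}{n!}$; both vanish when $n<m$. *)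

(* Defs.v *)
From Stdlib Require Import Reals ClassicalEpsilon Arith.
Open Scope R_scope.

Record Cx := mkC { Re : R; Im : R }.
Definition RtoC (r : R) : Cx := mkC r 0.
Definition C0 : Cx := RtoC 0.
Definition C1 : Cx := RtoC 1.
Definition Cadd (a b : Cx) : Cx := mkC (Re a + Re b) (Im a + Im b).
Definition Copp (a : Cx) : Cx := mkC (- Re a) (- Im a).
Definition Csub (a b : Cx) : Cx := Cadd a (Copp b).
Definition Cmul (a b : Cx) : Cx :=
  mkC (Re a * Re b - Im a * Im b) (Re a * Im b + Im a * Re b).
Definition Cscale (r : R) (a : Cx) : Cx := Cmul (RtoC r) a.
Fixpoint Cpow (a : Cx) (n : nat) : Cx :=
  match n with O => C1 | S n' => Cmul a (Cpow a n') end.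
(* Csum n f = f 0 + ... + f n *)
Fixpoint Csum (n : nat) (f : nat -> Cx) : Cx :=
  match n with O => f O | S n' => Cadd (Csum n' f) (f n) end.
(* Cprod n f = f 0 * ... * f (n-1) (empty product = 1) *)
Fixpoint Cprod (n : nat) (f : nat -> Cx) : Cx :=
  match n with O => C1 | S n' => Cmul (Cprod n' f) (f n') end.

Definition Cfall (w : Cx) (n : nat) : Cx := Cprod n (fun i => Csub w (RtoC (INR i))).
Definition Crise (w : Cx) (n : nat) : Cx := Cprod n (fun i => Cadd w (RtoC (INR i))).

Definition Rser_lim (a : nat -> R) : R :=
  match excluded_middle_informative (exists l, infinite_sum a l) with
  | left H => proj1_sig (constructive_indefinite_description _ H)
  | right _ => 0
  end.
(* a complex series converges iff real and imaginary parts converge *)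
Definition Cser_lim (a : nat -> Cx) : Cx :=
  mkC (Rser_lim (fun j => Re (a j))) (Rser_lim (fun j => Im (a j))).

Definition ser := nat -> Cx.
Definition sone : ser := fun n => match n with O => C1 | _ => C0 end.
Definition sadd (a b : ser) : ser := fun n => Cadd (a n) (b n).
Definition ssub (a b : ser) : ser := fun n => Csub (a n) (b n).
Definition sscale (r : R) (a : ser) : ser := fun n => Cscale r (a n).
Definition smul (a b : ser) : ser := fun n => Csum n (fun i => Cmul (a i) (b (n - i)%nat)).
Fixpoint spow (a : ser) (m : nat) : ser :=
  match m with O => sone | S m' => smul a (spow a m') end.
Definition sexp (a : Cx) : ser := fun n => Cscale (/ INR (fact n)) (Cpow a n).
(* (1 - t)^{-x} = sum_j x(x+1)...(x+j-1)/j! t^j *)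
Definition sbinneg (x : Cx) : ser := fun n => Cscale (/ INR (fact n)) (Crise x n).
(* -ln(1 - t) = sum_{j>=1} t^j / j *)
Definition smlog : ser := fun n => match n with O => C0 | _ => RtoC (/ INR n) end.

Definition qnum (q : R) (m : nat) : R := (1 - q ^ m) / (1 - q).

Definition ubern (rho : R) : ser := sscale (/ rho) (ssub sone (sexp (RtoC (- rho)))).
(* rho/(1-e^{-rho t}) * Li_{k,q}(u) = (1/u) sum_{m>=1} u^m/[m]_q^k
   = sum_{m>=1} u^{m-1}/[m]_q^k ; since u^{m-1} has order m-1, only m <= n+1
   contribute to the coefficient of t^n. *)
Definition LiOverU (rho q : R) (k : nat) : ser :=
  fun n => Csum n (fun m => Cscale (/ (qnum q (S m)) ^ k) (spow (ubern rho) m n)).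
Definition qpolyB (n : nat) (rho q : R) (k : nat) (z : Cx) : Cx :=
  Cscale (INR (fact n)) (smul (LiOverU rho q k) (sexp (Copp z)) n).

(* e^{xt}(e^t-1)^m/m! = sum_n S2(n,m,x) t^n/n! *)
Definition S2w (n m : nat) (x : Cx) : Cx :=
  Cscale (INR (fact n))
    (smul (sexp x) (sscale (/ INR (fact m)) (spow (ssub (sexp C1) sone) m)) n).
(* (1-t)^{-x}(-ln(1-t))^m/m! = sum_n S1(n,m,x) t^n/n! *)
Definition S1w (n m : nat) (x : Cx) : Cx :=
  Cscale (INR (fact n))
    (smul (sbinneg x) (sscale (/ INR (fact m)) (spow smlog m)) n).

Definition jint (q : R) (f : R -> Cx) : Cx :=
  Cscale (1 - q) (Cser_lim (fun j => Cscale (q ^ j) (f (q ^ j)))).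
(* k-fold iterated Jackson integral of g(x_1 ... x_k) *)
Fixpoint mjint (q : R) (k : nat) (g : R -> Cx) : Cx :=
  match k with
  | O => g 1
  | S k' => jint q (fun x1 => mjint q k' (fun p => g (x1 * p)))
  end.

Definition qpolyC (n : nat) (rho q : R) (k : nat) (z : Cx) : Cx :=
  Cscale (rho ^ n) (mjint q k (fun P => Cfall (Cscale (/ rho) (Csub (RtoC P) z)) n)).
Definition qpolyChat (n : nat) (rho q : R) (k : nat) (z : Cx) : Cx :=
  Cscale (rho ^ n) (mjint q k (fun P => Cfall (Cscale (/ rho) (Csub z (RtoC P))) n)).

(* Main.v *)
Require Import Defs.
From Stdlib Require Import Reals Arith.
From Stdlib Require Import Lia Lra FunctionalExtensionality Ring Field ClassicalEpsilon.
Open Scope R_scope.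


Lemma Cx_eq (a b : Cx) : Re a = Re b -> Im a = Im b -> a = b.
Proof. destruct a, b; simpl; intros; subst; reflexivity. Qed.

Ltac Ceq := apply Cx_eq; simpl; ring.

Lemma Cx_ring : ring_theory C0 Defs.C1 Cadd Cmul Csub Copp (@eq Cx).
Proof.
  constructor; intros; unfold C0, Defs.C1, RtoC, Cadd, Cmul, Csub, Copp; Ceq.
Qed.
Add Ring CxRing : Cx_ring.

Lemma RtoC_add a b : RtoC (a + b) = Cadd (RtoC a) (RtoC b).
Proof. unfold RtoC, Cadd; Ceq. Qed.
Lemma RtoC_mul a b : RtoC (a * b) = Cmul (RtoC a) (RtoC b).
Proof. unfold RtoC, Cmul; Ceq. Qed.
Lemma RtoC_opp a : RtoC (- a) = Copp (RtoC a).
Proof. unfold RtoC, Copp; Ceq. Qed.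
Lemma RtoC_sub a b : RtoC (a - b) = Csub (RtoC a) (RtoC b).
Proof. unfold RtoC, Csub, Cadd, Copp; Ceq. Qed.
Lemma RtoC_0 : RtoC 0 = C0. Proof. reflexivity. Qed.
Lemma RtoC_1 : RtoC 1 = Defs.C1. Proof. reflexivity. Qed.
Lemma Cpow_RtoC r n : Cpow (RtoC r) n = RtoC (r ^ n).
Proof. induction n; simpl. reflexivity. rewrite IHn, RtoC_mul; reflexivity. Qed.
Lemma Cpow_mul a b n : Cpow (Cmul a b) n = Cmul (Cpow a n) (Cpow b n).
Proof. induction n; simpl. unfold Defs.C1, RtoC, Cmul; Ceq. rewrite IHn; ring. Qed.
Lemma Cpow_add a n m : Cpow a (n + m) = Cmul (Cpow a n) (Cpow a m).
Proof. induction n; simpl. ring. rewrite IHn; ring. Qed.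

Lemma Csum_ext n f g : (forall i, (i <= n)%nat -> f i = g i) -> Csum n f = Csum n g.
Proof.
  induction n; intros H; simpl. apply H; lia.
  rewrite IHn by (intros; apply H; lia). rewrite H by lia. reflexivity.
Qed.
Lemma Csum_add n f g : Csum n (fun i => Cadd (f i) (g i)) = Cadd (Csum n f) (Csum n g).
Proof. induction n; simpl. reflexivity. rewrite IHn; ring. Qed.
Lemma Csum_mull n c f : Csum n (fun i => Cmul c (f i)) = Cmul c (Csum n f).
Proof. induction n; simpl. reflexivity. rewrite IHn; ring. Qed.
Lemma Csum_zero n f : (forall i, (i <= n)%nat -> f i = C0) -> Csum n f = C0.
Proof.
  induction n; intros H; simpl. apply H; lia.
  rewrite IHn by (intros; apply H; lia). rewrite H by lia. ring.
Qed.
Lemma Csum_first n f : Csum (S n) f = Cadd (f O) (Csum n (fun i => f (S i))).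
Proof.
  induction n. simpl. reflexivity.
  change (Csum (S (S n)) f) with (Cadd (Csum (S n) f) (f (S (S n)))).
  rewrite IHn. simpl. ring.
Qed.
Lemma Csum_swap n m F :
  Csum n (fun i => Csum m (fun j => F i j)) = Csum m (fun j => Csum n (fun i => F i j)).
Proof.
  induction n; simpl. reflexivity.
  rewrite IHn. rewrite <- Csum_add. reflexivity.
Qed.
Lemma Csum_extend m n f : (m <= n)%nat -> (forall i, (m < i <= n)%nat -> f i = C0) ->
  Csum n f = Csum m f.
Proof.
  intros Hmn. induction Hmn; intros H. reflexivity.
  simpl. rewrite IHHmn by (intros; apply H; lia). rewrite (H (S m0)) by lia. ring.
Qed.
Lemma Csum_drop m n f : (m <= n)%nat -> (forall i, (i < m)%nat -> f i = C0) ->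
  Csum n f = Csum (n - m) (fun j => f (m + j)%nat).
Proof.
  revert n f; induction m; intros n f Hmn H.
  rewrite Nat.sub_0_r. reflexivity.
  destruct n. lia. rewrite Csum_first. rewrite H by lia.
  rewrite (IHm n (fun i => f (S i))) by (auto with arith || (intros; apply H; lia)).
  simpl. ring.
Qed.
Lemma Csum_rev n f : Csum n f = Csum n (fun i => f (n - i)%nat).
Proof.
  induction n. reflexivity.
  rewrite (Csum_first n (fun i => f (S n - i)%nat)).
  change (Csum (S n) f) with (Cadd (Csum n f) (f (S n))). rewrite IHn.
  replace (S n - 0)%nat with (S n) by lia.
  assert (E: Csum n (fun i => f (n - i)%nat) = Csum n (fun i => f (S n - S i)%nat)).
  { apply Csum_ext; intros; f_equal. }
  rewrite E. ring.
Qed.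
Lemma Csum_tri n F :
  Csum n (fun s => Csum s (fun i => F i s)) =
  Csum n (fun i => Csum (n - i) (fun j => F i (i + j)%nat)).
Proof.
  induction n. reflexivity.
  simpl Csum at 1. rewrite IHn.
  change (Csum (S n) (fun i => Csum (S n - i) (fun j => F i (i + j)%nat))) with
    (Cadd (Csum n (fun i => Csum (S n - i) (fun j => F i (i + j)%nat)))
          (Csum (S n - S n) (fun j => F (S n) (S n + j)%nat))).
  rewrite Nat.sub_diag. simpl (Csum 0 _). rewrite Nat.add_0_r.
  assert (E: Csum n (fun i => Csum (S n - i) (fun j => F i (i + j)%nat)) =
     Csum n (fun i => Cadd (Csum (n - i) (fun j => F i (i + j)%nat)) (F i (S n)))).
  { apply Csum_ext; intros i Hi. replace (S n - i)%nat with (S (n - i)) by lia.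
    simpl. replace (i + S (n - i))%nat with (S n) by lia. reflexivity. }
  rewrite E, Csum_add. ring.
Qed.
Lemma Csum_first0 n g : g O = C0 -> Csum (S n) g = Csum n (fun i => g (S i)).
Proof. intro H. rewrite Csum_first, H. ring. Qed.
Lemma Csum_last0 n g : g (S n) = C0 -> Csum (S n) g = Csum n g.
Proof. intro H. simpl. rewrite H. ring. Qed.
Lemma Csum_sub n f g : Csum n (fun i => Csub (f i) (g i)) = Csub (Csum n f) (Csum n g).
Proof. induction n; simpl. reflexivity. rewrite IHn; unfold Csub; ring. Qed.
Lemma RtoC_m1 : RtoC (-1) = Copp Defs.C1.
Proof. unfold Copp, Defs.C1, RtoC; apply Cx_eq; simpl; ring. Qed.

Definition szero : ser := fun _ => C0.
Definition sopp (a : ser) : ser := fun n => Copp (a n).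
Definition sconst (c : Cx) : ser := fun n => match n with O => c | _ => C0 end.

Lemma smul_comm a b : smul a b = smul b a.
Proof.
  apply functional_extensionality; intro n. unfold smul.
  rewrite Csum_rev. apply Csum_ext; intros i Hi.
  replace (n - (n - i))%nat with i by lia. ring.
Qed.

Lemma smul_assoc a b c : smul a (smul b c) = smul (smul a b) c.
Proof.
  apply functional_extensionality; intro n. unfold smul.
  transitivity (Csum n (fun s => Csum s (fun i => Cmul (Cmul (a i) (b (s - i)%nat)) (c (n - s)%nat)))).
  2: { apply Csum_ext; intros s Hs.
       transitivity (Cmul (c (n - s)%nat) (Csum s (fun i => Cmul (a i) (b (s - i)%nat)))).
       rewrite <- Csum_mull. apply Csum_ext; intros; ring. ring. }
  rewrite Csum_tri. apply Csum_ext; intros i Hi.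
  rewrite <- Csum_mull. apply Csum_ext; intros j Hj.
  replace (i + j - i)%nat with j by lia. replace (n - (i + j))%nat with (n - i - j)%nat by lia.
  ring.
Qed.

Lemma smul_distr a b c : smul (sadd a b) c = sadd (smul a c) (smul b c).
Proof.
  apply functional_extensionality; intro n. unfold smul, sadd.
  rewrite <- Csum_add. apply Csum_ext; intros; ring.
Qed.

Lemma smul_const c a : smul (sconst c) a = fun n => Cmul c (a n).
Proof.
  apply functional_extensionality; intro n. unfold smul.
  destruct n. simpl. reflexivity.
  rewrite Csum_first. rewrite Csum_zero. simpl. replace (n - 0)%nat with n by lia. ring.
  intros; simpl. ring.
Qed.

Lemma sone_const : sone = sconst Defs.C1.
Proof. apply functional_extensionality; intros [|n]; reflexivity. Qed.

Lemma ser_ring : ring_theory szero sone sadd smul ssub sopp (@eq ser).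
Proof.
  constructor; intros.
  - apply functional_extensionality; intro n; unfold sadd, szero; ring.
  - apply functional_extensionality; intro n; unfold sadd; ring.
  - apply functional_extensionality; intro n; unfold sadd; ring.
  - rewrite sone_const, smul_const. apply functional_extensionality; intro n; ring.
  - apply smul_comm.
  - apply smul_assoc.
  - apply smul_distr.
  - reflexivity.
  - apply functional_extensionality; intro n; unfold sadd, sopp, szero; ring.
Qed.
Add Ring SerRing : ser_ring.

Lemma sconst_mul a b : smul (sconst a) (sconst b) = sconst (Cmul a b).
Proof. rewrite smul_const. apply functional_extensionality; intros [|n]; simpl; ring. Qed.
Lemma sconst_add a b : sadd (sconst a) (sconst b) = sconst (Cadd a b).
Proof. apply functional_extensionality; intros [|n]; unfold sadd; simpl; ring. Qed.
Lemma sscale_const r a : sscale r a = smul (sconst (RtoC r)) a.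
Proof. rewrite smul_const. reflexivity. Qed.

Lemma smul_0 a b : smul a b O = Cmul (a O) (b O).
Proof. reflexivity. Qed.

Lemma smul_low a b m : (forall i, (i < m)%nat -> b i = C0) ->
  forall n, (n < m)%nat -> smul a b n = C0.
Proof.
  intros H n Hn. unfold smul. apply Csum_zero. intros i Hi. rewrite H by lia. ring.
Qed.
Lemma spow_low a : a O = C0 -> forall l n, (n < l)%nat -> spow a l n = C0.
Proof.
  intros H0 l. induction l; intros n Hn. lia.
  simpl. unfold smul. apply Csum_zero. intros i Hi. destruct i.
  rewrite H0; ring. rewrite IHl by lia. ring.
Qed.

Lemma spow_const c l : spow (sconst c) l = sconst (Cpow c l).
Proof.
  induction l; simpl. apply sone_const. rewrite IHl, sconst_mul. reflexivity.
Qed.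
Lemma spow_mul a b l : spow (smul a b) l = smul (spow a l) (spow b l).
Proof. induction l; simpl. ring. rewrite IHl. ring. Qed.

Definition sder (a : ser) : ser := fun n => Cmul (RtoC (INR (S n))) (a (S n)).

Lemma sder_add a b : sder (sadd a b) = sadd (sder a) (sder b).
Proof. apply functional_extensionality; intro n; unfold sder, sadd; ring. Qed.
Lemma sder_const c : sder (sconst c) = szero.
Proof. apply functional_extensionality; intro n; unfold sder, szero; simpl; ring. Qed.

Lemma sder_mul a b : sder (smul a b) = sadd (smul (sder a) b) (smul a (sder b)).
Proof.
  apply functional_extensionality; intro n. unfold sder, sadd, smul.
  assert (E1: Csum n (fun i => Cmul (Cmul (RtoC (INR (S i))) (a (S i))) (b (n - i)%nat)) =
     Csum (S n) (fun i => Cmul (RtoC (INR i)) (Cmul (a i) (b (S n - i)%nat)))).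
  { rewrite Csum_first0. apply Csum_ext; intros; simpl (S n - S i)%nat. ring.
    simpl INR. rewrite RtoC_0. ring. }
  assert (E2: Csum n (fun i => Cmul (a i) (Cmul (RtoC (INR (S (n - i)))) (b (S (n - i)))))
     = Csum (S n) (fun i => Cmul (RtoC (INR (S n - i))) (Cmul (a i) (b (S n - i)%nat)))).
  { rewrite Csum_last0. apply Csum_ext; intros i Hi.
    replace (S n - i)%nat with (S (n - i)) by lia. ring.
    rewrite Nat.sub_diag. simpl INR. rewrite RtoC_0. ring. }
  rewrite E1, E2, <- Csum_add, <- Csum_mull. apply Csum_ext; intros i Hi.
  rewrite minus_INR by lia. rewrite RtoC_sub. ring.
Qed.
Lemma sder_sone : sder sone = szero.
Proof. rewrite sone_const. apply sder_const. Qed.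

Lemma sder_pow a l : sder (spow a (S l)) =
  smul (sconst (RtoC (INR (S l)))) (smul (spow a l) (sder a)).
Proof.
  induction l.
  - simpl. rewrite sder_mul, sder_sone. rewrite RtoC_1, <- sone_const. ring.
  - change (spow a (S (S l))) with (smul a (spow a (S l))).
    rewrite sder_mul, IHl.
    rewrite S_INR with (n := S l), RtoC_add, <- sconst_add, RtoC_1, <- sone_const.
    simpl spow. ring.
Qed.

Lemma sder_ssub a b : sder (ssub a b) = ssub (sder a) (sder b).
Proof. apply functional_extensionality; intro n; unfold sder, ssub, Csub, Cadd, Copp; Ceq. Qed.

Lemma fact_neq n : INR (fact n) <> 0.
Proof. apply INR_fact_neq_0. Qed.
Lemma Sn_neq n : INR (S n) <> 0.
Proof. apply not_0_INR; lia. Qed.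

Lemma fact_S_inv n : INR (S n) * / INR (fact (S n)) = / INR (fact n).
Proof.
  change (fact (S n)) with (S n * fact n)%nat. rewrite mult_INR.
  field. split; [apply fact_neq | apply Sn_neq].
Qed.

Lemma sder_sexp w : sder (sexp w) = smul (sconst w) (sexp w).
Proof.
  rewrite smul_const. apply functional_extensionality; intro n. unfold sder, sexp, Cscale.
  simpl Cpow. rewrite <- (fact_S_inv n). rewrite RtoC_mul. ring.
Qed.

Definition E1s : ser := ssub (sexp Defs.C1) sone.
Lemma sder_E1s : sder E1s = sadd E1s sone.
Proof.
  unfold E1s. rewrite sder_ssub, sder_sone, sder_sexp.
  replace (sconst Defs.C1) with sone by (symmetry; apply sone_const). ring.
Qed.

Definition G2 (w : Cx) (l : nat) : ser := smul (sexp w) (spow E1s l).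

Lemma sder_G2_S w l : sder (G2 w (S l)) =
  sadd (smul (sadd (sconst w) (sconst (RtoC (INR (S l))))) (G2 w (S l)))
       (smul (sconst (RtoC (INR (S l)))) (G2 w l)).
Proof.
  unfold G2. rewrite sder_mul, sder_pow, sder_E1s, sder_sexp. simpl spow. ring.
Qed.
Lemma sder_G2_0 w : sder (G2 w O) = smul (sconst w) (G2 w O).
Proof. unfold G2. rewrite sder_mul, sder_sexp. simpl spow. rewrite sder_sone. ring. Qed.

Lemma S2w_G2 n l w : S2w n l w = Cmul (RtoC (INR (fact n) * / INR (fact l))) (G2 w l n).
Proof.
  unfold S2w, G2, Cscale. rewrite sscale_const.
  replace (smul (sexp w) (smul (sconst (RtoC (/ INR (fact l)))) (spow (ssub (sexp Defs.C1) sone) l)))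
    with (smul (sconst (RtoC (/ INR (fact l)))) (smul (sexp w) (spow E1s l))) by (unfold E1s; ring).
  rewrite smul_const, RtoC_mul. ring.
Qed.

Lemma coef_S (X : ser) m r :
  Cmul (RtoC (INR (fact (S m)) * r)) (X (S m)) = Cmul (RtoC (INR (fact m) * r)) (sder X m).
Proof.
  unfold sder. change (fact (S m)) with (S m * fact m)%nat. rewrite mult_INR.
  rewrite !RtoC_mul. ring.
Qed.

Lemma S2w_rec_S m l w : S2w (S m) (S l) w =
  Cadd (Cmul (Cadd w (RtoC (INR (S l)))) (S2w m (S l) w)) (S2w m l w).
Proof.
  rewrite !S2w_G2, coef_S, sder_G2_S, sconst_add. unfold sadd. rewrite !smul_const.
  assert (H: INR (fact m) * / INR (fact (S l)) * INR (S l) = INR (fact m) * / INR (fact l)).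
  { rewrite <- (fact_S_inv l). field. apply fact_neq. }
  rewrite <- H. rewrite !RtoC_mul. ring.
Qed.

Lemma S2w_rec_0 m w : S2w (S m) O w = Cmul w (S2w m O w).
Proof.
  rewrite !S2w_G2, coef_S, sder_G2_0, smul_const. ring.
Qed.

Lemma E1s_0 : E1s O = C0.
Proof.
  unfold E1s, ssub, sexp, sone, Cscale. simpl. replace (/ 1) with 1 by (symmetry; apply Rinv_1).
  unfold Csub, Cadd, Copp, Cmul, C0, Defs.C1, RtoC. simpl. apply Cx_eq; simpl; ring.
Qed.

Lemma S2w_low n l w : (n < l)%nat -> S2w n l w = C0.
Proof.
  intro H. rewrite S2w_G2. unfold G2. rewrite (smul_low _ _ l). ring.
  intros; apply spow_low; auto. apply E1s_0. auto.
Qed.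

Lemma S2w_00 w : S2w O O w = Defs.C1.
Proof. unfold S2w, smul, sexp, Cscale; simpl. rewrite Rinv_1. unfold Cmul, Defs.C1, RtoC; apply Cx_eq; simpl; ring. Qed.

Definition sX : ser := fun n => match n with 1%nat => Defs.C1 | _ => C0 end.
Definition omt : ser := ssub sone sX.

Lemma sX_coef X n : smul sX X n = match n with O => C0 | S n' => X n' end.
Proof.
  unfold smul. destruct n. simpl. ring.
  rewrite Csum_first0 by (simpl; ring).
  destruct n. simpl. ring.
  rewrite Csum_first. rewrite Csum_zero. simpl. ring. intros; simpl; ring.
Qed.

Lemma omt_coef X m : X m = Cadd (smul omt X m) (match m with O => C0 | S n => X n end).
Proof.
  unfold omt. replace (smul (ssub sone sX) X) with (ssub X (smul sX X)) by ring.
  unfold ssub. rewrite sX_coef. unfold Csub. ring.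
Qed.

Lemma sder_sbinneg_coef w m : sder (sbinneg w) m = Cmul (RtoC (/ INR (fact m))) (Crise w (S m)).
Proof. unfold sder, sbinneg, Cscale. rewrite <- (fact_S_inv m), RtoC_mul. ring. Qed.

Lemma omt_sbinneg w : smul omt (sder (sbinneg w)) = smul (sconst w) (sbinneg w).
Proof.
  rewrite smul_const. apply functional_extensionality; intro m.
  pose proof (omt_coef (sder (sbinneg w)) m) as H.
  assert (E: smul omt (sder (sbinneg w)) m =
     Csub (sder (sbinneg w) m) (match m with O => C0 | S n => sder (sbinneg w) n end)).
  { rewrite H. unfold Csub. ring. }
  rewrite E. clear E H. destruct m.
  - rewrite sder_sbinneg_coef. unfold sbinneg, Cscale. simpl. rewrite Rinv_1.
    unfold Csub, Cadd, Copp, Cmul, C0, Defs.C1, RtoC, Crise; simpl. apply Cx_eq; simpl; ring.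
  - rewrite !sder_sbinneg_coef. unfold sbinneg, Cscale.
    change (Crise w (S (S m))) with (Cmul (Crise w (S m)) (Cadd w (RtoC (INR (S m))))).
    assert (Hf: / INR (fact m) = / INR (fact (S m)) * INR (S m)).
    { rewrite <- (fact_S_inv m). ring. }
    rewrite Hf, RtoC_mul. unfold Csub. ring.
Qed.

Definition sones : ser := fun _ => Defs.C1.
Lemma sder_smlog : sder smlog = sones.
Proof.
  apply functional_extensionality; intro n. unfold sder, smlog, sones.
  rewrite <- RtoC_mul. rewrite Rinv_r by apply Sn_neq. reflexivity.
Qed.
Lemma omt_smlog : smul omt (sder smlog) = sone.
Proof.
  apply functional_extensionality; intro m.
  pose proof (omt_coef (sder smlog) m) as H. rewrite sder_smlog in *.
  assert (E: smul omt sones m = Csub (sones m) (match m with O => C0 | S n => sones n end)).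
  { rewrite H. unfold Csub. ring. }
  rewrite E. destruct m; unfold sones, sone, Csub; simpl; ring.
Qed.

Definition H1 (w : Cx) (l : nat) : ser := smul (sbinneg w) (spow smlog l).

Lemma omt_H1_S w l : smul omt (sder (H1 w (S l))) =
  sadd (smul (sconst w) (H1 w (S l))) (smul (sconst (RtoC (INR (S l)))) (H1 w l)).
Proof.
  unfold H1. rewrite sder_mul, sder_pow.
  transitivity (sadd (smul (smul omt (sder (sbinneg w))) (spow smlog (S l)))
     (smul (sconst (RtoC (INR (S l)))) (smul (smul (sbinneg w) (spow smlog l)) (smul omt (sder smlog))))).
  ring. rewrite omt_sbinneg, omt_smlog. simpl spow. ring.
Qed.
Lemma omt_H1_0 w : smul omt (sder (H1 w O)) = smul (sconst w) (H1 w O).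
Proof.
  unfold H1. simpl spow. rewrite sder_mul, sder_sone.
  transitivity (smul (smul omt (sder (sbinneg w))) sone). ring. rewrite omt_sbinneg. ring.
Qed.

Lemma S1w_H1 n l w : S1w n l w = Cmul (RtoC (INR (fact n) * / INR (fact l))) (H1 w l n).
Proof.
  unfold S1w, H1, Cscale. rewrite sscale_const.
  replace (smul (sbinneg w) (smul (sconst (RtoC (/ INR (fact l)))) (spow smlog l)))
    with (smul (sconst (RtoC (/ INR (fact l)))) (smul (sbinneg w) (spow smlog l))) by ring.
  rewrite smul_const, RtoC_mul. ring.
Qed.

Lemma sder_split (X : ser) m :
  sder X m = Cadd (smul omt (sder X) m) (Cmul (RtoC (INR m)) (X m)).
Proof.
  rewrite (omt_coef (sder X) m) at 1. f_equal. destruct m. simpl. rewrite RtoC_0. ring.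
  reflexivity.
Qed.

Lemma S1w_rec_S m l w : S1w (S m) (S l) w =
  Cadd (Cmul (Cadd (RtoC (INR m)) w) (S1w m (S l) w)) (S1w m l w).
Proof.
  rewrite !S1w_H1, coef_S, sder_split, omt_H1_S. unfold sadd. rewrite !smul_const.
  assert (H: INR (fact m) * / INR (fact (S l)) * INR (S l) = INR (fact m) * / INR (fact l)).
  { rewrite <- (fact_S_inv l). field. apply fact_neq. }
  rewrite <- H. rewrite !RtoC_mul. ring.
Qed.
Lemma S1w_rec_0 m w : S1w (S m) O w = Cmul (Cadd (RtoC (INR m)) w) (S1w m O w).
Proof.
  rewrite !S1w_H1, coef_S, sder_split, omt_H1_0, smul_const. ring.
Qed.
Lemma S1w_low n l w : (n < l)%nat -> S1w n l w = C0.
Proof.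
  intro H. rewrite S1w_H1. unfold H1. rewrite (smul_low _ _ l). ring.
  intros; apply spow_low; auto. auto.
Qed.
Lemma S1w_00 w : S1w O O w = Defs.C1.
Proof. unfold S1w, smul, sbinneg, Cscale; simpl. rewrite Rinv_1. unfold Cmul, Defs.C1, RtoC, Crise; apply Cx_eq; simpl; ring. Qed.

Lemma I2 N m : (m <= N)%nat -> forall z w,
  Csum N (fun l => Cmul (S2w m l w) (Cfall z l)) = Cpow (Cadd z w) m.
Proof.
  revert N. induction m; intros N HmN z w.
  - rewrite (Csum_extend 0 N) by (lia || (intros; rewrite S2w_low by lia; ring)).
    simpl. rewrite S2w_00. unfold Cfall; simpl. ring.
  - destruct N as [|N']. lia.
    simpl Cpow. rewrite <- (IHm (S N')) by lia.
    rewrite Csum_first. rewrite S2w_rec_0.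
    assert (E: Csum N' (fun i => Cmul (S2w (S m) (S i) w) (Cfall z (S i))) =
      Cadd (Csum N' (fun i => Cmul (Cmul (Cadd w (RtoC (INR (S i)))) (S2w m (S i) w)) (Cfall z (S i))))
           (Csum N' (fun i => Cmul (S2w m i w) (Cfall z (S i))))).
    { rewrite <- Csum_add. apply Csum_ext; intros. rewrite S2w_rec_S. ring. }
    rewrite E. clear E.
    rewrite <- Csum_mull.
    transitivity (Csum (S N') (fun l => Cadd (Cmul (S2w m l w) (Cfall z (S l)))
                      (Cmul (Cmul (Cadd w (RtoC (INR l))) (S2w m l w)) (Cfall z l)))).
    2: { apply Csum_ext; intros l _. change (Cfall z (S l)) with (Cmul (Cfall z l) (Csub z (RtoC (INR l)))).
         unfold Csub. ring. }
    rewrite Csum_add. rewrite Csum_last0 by (rewrite S2w_low by lia; ring).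
    rewrite (Csum_first N' (fun l => Cmul (Cmul (Cadd w (RtoC (INR l))) (S2w m l w)) (Cfall z l))).
    simpl INR at 2. rewrite RtoC_0. ring.
Qed.

Lemma I1 N m : (m <= N)%nat -> forall Z v,
  Csum N (fun l => Cmul (S1w m l v) (Cpow Z l)) = Crise (Cadd Z v) m.
Proof.
  revert N. induction m; intros N HmN Z v.
  - rewrite (Csum_extend 0 N) by (lia || (intros; rewrite S1w_low by lia; ring)).
    simpl. rewrite S1w_00. unfold Crise; simpl. ring.
  - destruct N as [|N']. lia.
    change (Crise (Cadd Z v) (S m)) with (Cmul (Crise (Cadd Z v) m) (Cadd (Cadd Z v) (RtoC (INR m)))).
    rewrite <- (IHm (S N')) by lia.
    rewrite Csum_first. rewrite S1w_rec_0.
    assert (E: Csum N' (fun i => Cmul (S1w (S m) (S i) v) (Cpow Z (S i))) =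
      Cadd (Csum N' (fun i => Cmul (Cmul (Cadd (RtoC (INR m)) v) (S1w m (S i) v)) (Cpow Z (S i))))
           (Csum N' (fun i => Cmul (S1w m i v) (Cpow Z (S i))))).
    { rewrite <- Csum_add. apply Csum_ext; intros. rewrite S1w_rec_S. ring. }
    rewrite E. clear E.
    transitivity (Csum (S N') (fun l => Cadd (Cmul (S1w m l v) (Cpow Z (S l)))
                      (Cmul (Cmul (Cadd (RtoC (INR m)) v) (S1w m l v)) (Cpow Z l)))).
    2: { rewrite (Cx_ring.(Rmul_comm)). rewrite <- Csum_mull. apply Csum_ext; intros l _. simpl Cpow. ring. }
    rewrite Csum_add. rewrite Csum_last0 by (rewrite S1w_low by lia; ring).
    rewrite (Csum_first N' (fun l => Cmul (Cmul (Cadd (RtoC (INR m)) v) (S1w m l v)) (Cpow Z l))).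
    simpl Cpow. ring.
Qed.

Definition Tsum N m j w := Csum N (fun l => Cmul (Cmul (RtoC ((-1) ^ l)) (S1w m l w)) (S2w l j w)).

Lemma Torth N m : (m <= N)%nat -> forall j w,
  Tsum N m j w = if Nat.eqb m j then RtoC ((-1) ^ j) else C0.
Proof.
  revert N. induction m; intros N HmN j w.
  - unfold Tsum. rewrite (Csum_extend 0 N) by (lia || (intros; rewrite S1w_low by lia; ring)).
    simpl. rewrite S1w_00. destruct j; simpl. rewrite S2w_00. ring.
    rewrite S2w_low by lia. ring.
  - destruct N as [|N']. lia.
    assert (HT: Tsum (S N') (S m) j w =
      Csub (Cmul (Cadd (RtoC (INR m)) w) (Tsum (S N') m j w))
           (Csum (S N') (fun i => Cmul (Cmul (RtoC ((-1) ^ i)) (S1w m i w)) (S2w (S i) j w)))).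
    { unfold Tsum. rewrite Csum_first. rewrite (Csum_first N' (fun l => Cmul (Cmul (RtoC ((-1) ^ l)) (S1w m l w)) (S2w l j w))).
      rewrite (Csum_last0 N' (fun i => Cmul (Cmul (RtoC ((-1) ^ i)) (S1w m i w)) (S2w (S i) j w)))
        by (rewrite S1w_low by lia; ring).
      rewrite S1w_rec_0.
      assert (E: Csum N' (fun i => Cmul (Cmul (RtoC ((-1) ^ S i)) (S1w (S m) (S i) w)) (S2w (S i) j w)) =
         Csub (Cmul (Cadd (RtoC (INR m)) w) (Csum N' (fun i => Cmul (Cmul (RtoC ((-1) ^ S i)) (S1w m (S i) w)) (S2w (S i) j w))))
              (Csum N' (fun i => Cmul (Cmul (RtoC ((-1) ^ i)) (S1w m i w)) (S2w (S i) j w)))).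
      { rewrite <- Csum_mull, <- Csum_sub.
        apply Csum_ext; intros. rewrite S1w_rec_S. simpl pow. rewrite RtoC_mul, RtoC_m1. unfold Csub. ring. }
      rewrite E. simpl pow. unfold Csub. ring. }
    rewrite HT. clear HT.
    rewrite (IHm (S N')) by lia.
    destruct j as [|j'].
    + assert (U: Csum (S N') (fun i => Cmul (Cmul (RtoC ((-1) ^ i)) (S1w m i w)) (S2w (S i) 0 w)) =
               Cmul w (Tsum (S N') m 0 w)).
      { unfold Tsum. rewrite <- Csum_mull. apply Csum_ext; intros. rewrite S2w_rec_0. ring. }
      rewrite U, (IHm (S N')) by lia. simpl Nat.eqb.
      destruct m; simpl Nat.eqb. simpl INR. rewrite RtoC_0. unfold Csub. ring. unfold Csub; ring.
    + assert (U: Csum (S N') (fun i => Cmul (Cmul (RtoC ((-1) ^ i)) (S1w m i w)) (S2w (S i) (S j') w)) =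
               Cadd (Cmul (Cadd w (RtoC (INR (S j')))) (Tsum (S N') m (S j') w)) (Tsum (S N') m j' w)).
      { unfold Tsum. rewrite <- Csum_mull, <- Csum_add. apply Csum_ext; intros. rewrite S2w_rec_S. ring. }
      rewrite U, !(IHm (S N')) by lia.
      change (Nat.eqb (S m) (S j')) with (Nat.eqb m j').
      destruct (Nat.eqb_spec m (S j')) as [e|ne].
      * subst m. replace (Nat.eqb (S j') j') with false by (symmetry; apply Nat.eqb_neq; lia).
        unfold Csub. ring.
      * destruct (Nat.eqb_spec m j') as [e2|ne2].
        -- subst. simpl pow. rewrite RtoC_mul, RtoC_m1. unfold Csub. ring.
        -- unfold Csub. ring.
Qed.

Lemma Rser_lim_eq a l : infinite_sum a l -> Rser_lim a = l.
Proof.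
  intro H. unfold Rser_lim. destruct (excluded_middle_informative _) as [e|ne].
  - destruct (constructive_indefinite_description _ e) as [l' Hl']. simpl.
    eapply uniqueness_sum; eauto.
  - exfalso; apply ne; eauto.
Qed.

Lemma isum_plus a b la lb : infinite_sum a la -> infinite_sum b lb ->
  infinite_sum (fun n => a n + b n) (la + lb).
Proof.
  intros Ha Hb. change (Un_cv (sum_f_R0 (fun n => a n + b n)) (la + lb)).
  apply Un_cv_ext with (un := fun N => sum_f_R0 a N + sum_f_R0 b N).
  intro; symmetry; apply sum_plus. apply CV_plus; assumption.
Qed.

Lemma isum_scal a l c : infinite_sum a l -> infinite_sum (fun n => c * a n) (c * l).
Proof.
  intros Ha. change (Un_cv (sum_f_R0 (fun n => c * a n)) (c * l)).
  apply Un_cv_ext with (un := fun N => c * sum_f_R0 a N).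
  intro; rewrite scal_sum; apply sum_eq; intros; ring.
  apply CV_mult. intros e He. exists O. intros. unfold Rdist. rewrite Rminus_diag, Rabs_R0. lra.
  exact Ha.
Qed.

Lemma isum_ext a b l : (forall n, a n = b n) -> infinite_sum a l -> infinite_sum b l.
Proof.
  intros E H. change (Un_cv (sum_f_R0 b) l). apply Un_cv_ext with (un := sum_f_R0 a).
  intro; apply sum_eq; auto. exact H.
Qed.

Lemma isum_geom d r : Rabs r < 1 -> infinite_sum (fun j => d * r ^ j) (d * / (1 - r)).
Proof.
  intro H. apply isum_scal. pose proof (GP_infinite r H) as G. unfold Pser in G.
  eapply isum_ext; [|exact G]. intros; simpl; ring.
Qed.

Lemma isum_fin N (d r : nat -> R) : (forall i, (i <= N)%nat -> Rabs (r i) < 1) ->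
  infinite_sum (fun j => sum_f_R0 (fun i => d i * r i ^ j) N)
               (sum_f_R0 (fun i => d i * / (1 - r i)) N).
Proof.
  induction N; intro H.
  - simpl. apply isum_geom. apply H; lia.
  - simpl. apply isum_plus. apply IHN; intros; apply H; lia. apply isum_geom; apply H; lia.
Qed.

Lemma Re_Csum n f : Re (Csum n f) = sum_f_R0 (fun i => Re (f i)) n.
Proof. induction n; simpl. reflexivity. rewrite IHn; reflexivity. Qed.
Lemma Im_Csum n f : Im (Csum n f) = sum_f_R0 (fun i => Im (f i)) n.
Proof. induction n; simpl. reflexivity. rewrite IHn; reflexivity. Qed.

Lemma qpow_lt q i : 0 <= q < 1 -> 0 <= q ^ S i < 1.
Proof.
  intro Hq. split. apply pow_le; lra.
  induction i. simpl; lra. simpl in *. 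
  assert (0 <= q * q ^ i) by (apply Rmult_le_pos; [lra | apply pow_le; lra]).
  nra.
Qed.

Lemma jint_poly q N (c : nat -> Cx) f : 0 <= q < 1 ->
  (forall x, f x = Csum N (fun i => Cmul (c i) (RtoC (x ^ i)))) ->
  jint q f = Csum N (fun i => Cmul (c i) (RtoC (/ qnum q (S i)))).
Proof.
  intros Hq Hf. unfold jint, Cser_lim, Cscale.
  assert (Hr: forall i, (i <= N)%nat -> Rabs (q ^ S i) < 1).
  { intros i _. pose proof (qpow_lt q i Hq). rewrite Rabs_right; lra. }
  assert (ER: Rser_lim (fun j => Re (Cmul (RtoC (q ^ j)) (f (q ^ j)))) =
          sum_f_R0 (fun i => Re (c i) * / (1 - q ^ S i)) N).
  { apply Rser_lim_eq. eapply isum_ext; [|apply (isum_fin N (fun i => Re (c i)) (fun i => q ^ S i) Hr)].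
    intro j. rewrite Hf. simpl. rewrite Re_Csum. rewrite Rmult_0_l, Rminus_0_r.
    rewrite scal_sum. apply sum_eq; intros i _. simpl. rewrite <- !pow_mult.
    rewrite Rpow_mult_distr, <- pow_mult, Nat.mul_comm. ring. }
  assert (EI: Rser_lim (fun j => Im (Cmul (RtoC (q ^ j)) (f (q ^ j)))) =
          sum_f_R0 (fun i => Im (c i) * / (1 - q ^ S i)) N).
  { apply Rser_lim_eq. eapply isum_ext; [|apply (isum_fin N (fun i => Im (c i)) (fun i => q ^ S i) Hr)].
    intro j. rewrite Hf. simpl. rewrite Im_Csum. rewrite Rmult_0_l, Rplus_0_r.
    rewrite scal_sum. apply sum_eq; intros i _. simpl. rewrite <- !pow_mult.
    rewrite Rpow_mult_distr, <- pow_mult, Nat.mul_comm. ring. }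
  rewrite ER, EI. apply Cx_eq; simpl; rewrite ?Re_Csum, ?Im_Csum; simpl.
  - rewrite Rmult_0_l, Rminus_0_r, scal_sum. apply sum_eq; intros i Hi. simpl.
    unfold qnum. simpl pow. assert (1 - q * q ^ i <> 0) by (pose proof (qpow_lt q i Hq); simpl in *; lra).
    field. repeat split; lra.
  - rewrite Rmult_0_l, Rplus_0_r, scal_sum. apply sum_eq; intros i Hi. simpl.
    unfold qnum. simpl pow. assert (1 - q * q ^ i <> 0) by (pose proof (qpow_lt q i Hq); simpl in *; lra).
    field. repeat split; lra.
Qed.

Lemma mjint_poly q k : 0 <= q < 1 -> forall N c f,
  (forall x, f x = Csum N (fun i => Cmul (c i) (RtoC (x ^ i)))) ->
  mjint q k f = Csum N (fun i => Cmul (c i) (RtoC ((/ qnum q (S i)) ^ k))).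
Proof.
  intro Hq. induction k; intros N c f Hf.
  - simpl. rewrite Hf. apply Csum_ext; intros. rewrite pow1. reflexivity.
  - simpl mjint.
    rewrite (jint_poly q N (fun i => Cmul (c i) (RtoC ((/ qnum q (S i)) ^ k)))); auto.
    + apply Csum_ext; intros. simpl pow. rewrite (RtoC_mul (/ qnum q (S i))). ring.
    + intro x. rewrite (IHk N (fun i => Cmul (c i) (RtoC (x ^ i)))).
      apply Csum_ext; intros; ring.
      intro p. rewrite Hf. apply Csum_ext; intros. rewrite Rpow_mult_distr, RtoC_mul. ring.
Qed.

Lemma Csum_mulr n c f : Csum n (fun i => Cmul (f i) c) = Cmul (Csum n f) c.
Proof. induction n; simpl. reflexivity. rewrite IHn; ring. Qed.

Lemma mjint_lin q k L N (d : nat -> Cx) (F : nat -> R -> Cx) (c : nat -> nat -> Cx) :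
  0 <= q < 1 ->
  (forall l x, (l <= L)%nat -> F l x = Csum N (fun i => Cmul (c l i) (RtoC (x ^ i)))) ->
  mjint q k (fun x => Csum L (fun l => Cmul (d l) (F l x))) =
  Csum L (fun l => Cmul (d l) (mjint q k (F l))).
Proof.
  intros Hq HF.
  rewrite (mjint_poly q k Hq N (fun i => Csum L (fun l => Cmul (d l) (c l i)))).
  - transitivity (Csum L (fun l => Cmul (d l) (Csum N (fun i => Cmul (c l i) (RtoC ((/ qnum q (S i)) ^ k)))))).
    + transitivity (Csum N (fun i => Csum L (fun l => Cmul (d l) (Cmul (c l i) (RtoC ((/ qnum q (S i)) ^ k)))))).
      apply Csum_ext; intros. rewrite <- Csum_mulr. apply Csum_ext; intros; ring.
      rewrite Csum_swap. apply Csum_ext; intros. rewrite Csum_mull. reflexivity.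
    + apply Csum_ext; intros l Hl. f_equal. symmetry. apply mjint_poly; auto.
  - intro x. transitivity (Csum L (fun l => Cmul (d l) (Csum N (fun i => Cmul (c l i) (RtoC (x ^ i)))))).
    apply Csum_ext; intros; rewrite HF; auto.
    transitivity (Csum L (fun l => Csum N (fun i => Cmul (Cmul (d l) (c l i)) (RtoC (x ^ i))))).
    apply Csum_ext; intros. rewrite <- Csum_mull. apply Csum_ext; intros; ring.
    rewrite Csum_swap. apply Csum_ext; intros. rewrite Csum_mulr. reflexivity.
Qed.

Definition sdil (c : Cx) (A : ser) : ser := fun n => Cmul (Cpow c n) (A n).

Lemma sdil_mul c A B : sdil c (smul A B) = smul (sdil c A) (sdil c B).
Proof.
  apply functional_extensionality; intro n. unfold sdil, smul.
  rewrite <- Csum_mull. apply Csum_ext; intros i Hi.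
  replace n with (i + (n - i))%nat at 1 by lia. rewrite Cpow_add. ring.
Qed.
Lemma sdil_sone c : sdil c sone = sone.
Proof. apply functional_extensionality; intros [|n]; unfold sdil, sone; simpl; ring. Qed.
Lemma sdil_pow c A l : sdil c (spow A l) = spow (sdil c A) l.
Proof. induction l; simpl. apply sdil_sone. rewrite sdil_mul, IHl. reflexivity. Qed.
Lemma sdil_ssub c A B : sdil c (ssub A B) = ssub (sdil c A) (sdil c B).
Proof. apply functional_extensionality; intro n; unfold sdil, ssub, Csub; ring. Qed.
Lemma sdil_sexp c a : sdil c (sexp a) = sexp (Cmul c a).
Proof.
  apply functional_extensionality; intro n; unfold sdil, sexp, Cscale. rewrite Cpow_mul. ring.
Qed.
Lemma sconst_opp a : sconst (Copp a) = sopp (sconst a).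
Proof. apply functional_extensionality; intros [|n]; unfold sopp; simpl; unfold C0, Copp, RtoC; apply Cx_eq; simpl; ring. Qed.

Lemma ubern_dil rho : rho <> 0 ->
  ubern rho = smul (sconst (RtoC (- / rho))) (sdil (RtoC (- rho)) E1s).
Proof.
  intro Hr. unfold ubern, E1s. rewrite sdil_ssub, sdil_sexp, sdil_sone, sscale_const.
  replace (Cmul (RtoC (- rho)) Defs.C1) with (RtoC (- rho)) by ring.
  rewrite (RtoC_opp (/ rho)), sconst_opp. ring.
Qed.

Lemma ubern_0 rho : ubern rho O = C0.
Proof.
  unfold ubern, sscale, ssub, sone, sexp, Cscale. simpl. rewrite Rinv_1.
  unfold Cmul, Csub, Cadd, Copp, RtoC, Defs.C1, C0. apply Cx_eq; simpl; ring.
Qed.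

Lemma LiOverU_split rho q k z n :
  smul (LiOverU rho q k) (sexp z) n =
  Csum n (fun m => Cmul (RtoC (/ qnum q (S m) ^ k)) (smul (spow (ubern rho) m) (sexp z) n)).
Proof.
  unfold smul at 1. unfold LiOverU, Cscale.
  transitivity (Csum n (fun i => Csum i (fun m => Cmul (Cmul (RtoC (/ qnum q (S m) ^ k)) (spow (ubern rho) m i)) (sexp z (n - i)%nat)))).
  { apply Csum_ext; intros. rewrite <- Csum_mulr. reflexivity. }
  rewrite (Csum_tri n (fun m i => Cmul (Cmul (RtoC (/ qnum q (S m) ^ k)) (spow (ubern rho) m i)) (sexp z (n - i)%nat))).
  apply Csum_ext; intros m Hm. unfold smul.
  rewrite (Csum_drop m n) by (lia || (intros; rewrite spow_low by (apply ubern_0 || lia); ring)).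
  rewrite <- Csum_mull. apply Csum_ext; intros; ring.
Qed.

Lemma B_expand n rho q k z : rho <> 0 ->
  qpolyB n rho q k z = Csum n (fun m =>
     Cmul (RtoC (/ qnum q (S m) ^ k * ((- / rho) ^ m * (- rho) ^ n) * INR (fact m)))
          (S2w n m (Cscale (/ rho) z))).
Proof.
  intro Hr. unfold qpolyB, Cscale at 1. rewrite LiOverU_split.
  rewrite <- Csum_mull. apply Csum_ext; intros m Hm.
  assert (E: smul (spow (ubern rho) m) (sexp (Copp z)) =
     smul (sconst (RtoC ((- / rho) ^ m))) (sdil (RtoC (- rho)) (G2 (Cscale (/ rho) z) m))).
  { rewrite ubern_dil by auto. rewrite spow_mul, spow_const, Cpow_RtoC.
    unfold G2. rewrite sdil_mul, sdil_sexp, sdil_pow.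
    replace (Cmul (RtoC (- rho)) (Cscale (/ rho) z)) with (Copp z).
    ring. unfold Cscale, Cmul, Copp, RtoC. apply Cx_eq; simpl; field; auto. }
  rewrite E, smul_const. unfold sdil. rewrite S2w_G2, Cpow_RtoC.
  rewrite !RtoC_mul.
  assert (HF: INR (fact n) = INR (fact m) * (INR (fact n) * / INR (fact m))).
  { field. apply fact_neq. }
  rewrite HF at 1. rewrite !RtoC_mul. ring.
Qed.

Lemma Cfall_Crise x l : Cfall x l = Cmul (RtoC ((-1) ^ l)) (Crise (Copp x) l).
Proof.
  induction l. unfold Cfall, Crise; simpl. rewrite RtoC_1. ring.
  change (Cfall x (S l)) with (Cmul (Cfall x l) (Csub x (RtoC (INR l)))).
  change (Crise (Copp x) (S l)) with (Cmul (Crise (Copp x) l) (Cadd (Copp x) (RtoC (INR l)))).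
  rewrite IHl. simpl pow. rewrite (RtoC_mul (-1)), RtoC_m1. unfold Csub. ring.
Qed.

Lemma C_poly rho z l N P : rho <> 0 -> (l <= N)%nat ->
  Cfall (Cscale (/ rho) (Csub (RtoC P) z)) l =
  Csum N (fun i => Cmul (Cmul (RtoC ((-1) ^ l * (- / rho) ^ i)) (S1w l i (Cscale (/ rho) z))) (RtoC (P ^ i))).
Proof.
  intros Hr Hl. rewrite Cfall_Crise.
  replace (Copp (Cscale (/ rho) (Csub (RtoC P) z))) with
    (Cadd (Cmul (RtoC (- / rho)) (RtoC P)) (Cscale (/ rho) z))
    by (unfold Cscale, Cmul, Copp, Csub, Cadd, RtoC; apply Cx_eq; simpl; ring).
  rewrite <- (I1 N l Hl). rewrite <- Csum_mull. apply Csum_ext; intros.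
  rewrite Cpow_mul, !Cpow_RtoC, !RtoC_mul. ring.
Qed.

Lemma Chat_poly rho z l N P : rho <> 0 -> (l <= N)%nat ->
  Cfall (Cscale (/ rho) (Csub z (RtoC P))) l =
  Csum N (fun i => Cmul (Cmul (RtoC ((-1) ^ l * (/ rho) ^ i)) (S1w l i (Copp (Cscale (/ rho) z)))) (RtoC (P ^ i))).
Proof.
  intros Hr Hl. rewrite Cfall_Crise.
  replace (Copp (Cscale (/ rho) (Csub z (RtoC P)))) with
    (Cadd (Cmul (RtoC (/ rho)) (RtoC P)) (Copp (Cscale (/ rho) z)))
    by (unfold Cscale, Cmul, Copp, Csub, Cadd, RtoC; apply Cx_eq; simpl; ring).
  rewrite <- (I1 N l Hl). rewrite <- Csum_mull. apply Csum_ext; intros.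
  rewrite Cpow_mul, !Cpow_RtoC, !RtoC_mul. ring.
Qed.

Lemma C_expand n rho q k z : rho <> 0 -> 0 <= q < 1 ->
  qpolyC n rho q k z = Csum n (fun i =>
    Cmul (RtoC (rho ^ n * ((-1) ^ n * (- / rho) ^ i) * / qnum q (S i) ^ k)) (S1w n i (Cscale (/ rho) z))).
Proof.
  intros Hr Hq. unfold qpolyC, Cscale at 1.
  rewrite (mjint_poly q k Hq n (fun i => Cmul (RtoC ((-1) ^ n * (- / rho) ^ i)) (S1w n i (Cscale (/ rho) z)))).
  rewrite <- Csum_mull. apply Csum_ext; intros. rewrite (pow_inv (qnum q (S i))), !RtoC_mul. ring.
  intro P. apply C_poly; auto.
Qed.

Lemma Chat_expand n rho q k z : rho <> 0 -> 0 <= q < 1 ->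
  qpolyChat n rho q k z = Csum n (fun i =>
    Cmul (RtoC (rho ^ n * ((-1) ^ n * (/ rho) ^ i) * / qnum q (S i) ^ k)) (S1w n i (Copp (Cscale (/ rho) z)))).
Proof.
  intros Hr Hq. unfold qpolyChat, Cscale at 1.
  rewrite (mjint_poly q k Hq n (fun i => Cmul (RtoC ((-1) ^ n * (/ rho) ^ i)) (S1w n i (Copp (Cscale (/ rho) z))))).
  rewrite <- Csum_mull. apply Csum_ext; intros. rewrite (pow_inv (qnum q (S i))), !RtoC_mul. ring.
  intro P. apply Chat_poly; auto.
Qed.

Lemma Csum_S n f : Csum (S n) f = Cadd (Csum n f) (f (S n)).
Proof. reflexivity. Qed.

Lemma Csum_delta N m (g : nat -> Cx) : (m <= N)%nat ->
  Csum N (fun i => if Nat.eqb i m then g i else C0) = g m.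
Proof.
  induction N; intro H.
  - assert (m = O) by lia; subst. reflexivity.
  - destruct (Nat.eq_dec m (S N)) as [e|ne].
    + subst. rewrite Csum_S. cbv beta. rewrite Csum_zero. rewrite Nat.eqb_refl. ring.
      intros i Hi. destruct (Nat.eqb_spec i (S N)). lia. reflexivity.
    + rewrite Csum_S. cbv beta. rewrite IHN by lia. destruct (Nat.eqb_spec (S N) m). lia. ring.
Qed.

Lemma pow_sub_m1 n m : (m <= n)%nat -> (-1) ^ (n - m) = (-1) ^ n * (-1) ^ m.
Proof.
  intro H. replace n with ((n - m) + m)%nat at 2 by lia. rewrite pow_add.
  rewrite Rmult_assoc, <- Rpow_mult_distr. replace (-1 * -1) with 1 by ring. rewrite pow1. ring.
Qed.

Lemma pow_sub_r rho n l : rho <> 0 -> (l <= n)%nat -> rho ^ (n - l) * rho ^ l = rho ^ n.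
Proof. intros. rewrite <- pow_add. f_equal. lia. Qed.


Lemma qpolyC_mj (rho q : R) (k : nat) (y : Cx) l : qpolyC l rho q k y =
  Cmul (RtoC (rho ^ l)) (mjint q k (fun P => Cfall (Cscale (/ rho) (Csub (RtoC P) y)) l)).
Proof. reflexivity. Qed.
Lemma qpolyChat_mj (rho q : R) (k : nat) (y : Cx) l : qpolyChat l rho q k y =
  Cmul (RtoC (rho ^ l)) (mjint q k (fun P => Cfall (Cscale (/ rho) (Csub y (RtoC P))) l)).
Proof. reflexivity. Qed.

Lemma mjint_mono (q : R) (k : nat) (hq : 0 <= q < 1) m (r : R) :
  mjint q k (fun P => RtoC (r ^ m * P ^ m)) = RtoC (r ^ m * / qnum q (S m) ^ k).
Proof.
  rewrite (mjint_poly q k hq m (fun i => if Nat.eqb i m then RtoC (r ^ m) else C0)).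
  - transitivity (Csum m (fun i => if Nat.eqb i m then Cmul (RtoC (r ^ m)) (RtoC ((/ qnum q (S i)) ^ k)) else C0)).
    apply Csum_ext; intros; destruct (Nat.eqb i m); ring.
    rewrite Csum_delta by lia. rewrite pow_inv, RtoC_mul. reflexivity.
  - intro P. transitivity (Csum m (fun i => if Nat.eqb i m then Cmul (RtoC (r ^ m)) (RtoC (P ^ i)) else C0)).
    rewrite Csum_delta by lia. rewrite RtoC_mul. reflexivity.
    apply Csum_ext; intros; destruct (Nat.eqb i m); ring.
Qed.

Lemma Ypart1 (rho q : R) (k : nat) (y : Cx) (hrho : rho <> 0) (hq : 0 <= q < 1) n m : (m <= n)%nat ->
  Csum n (fun l => Cmul (RtoC (rho ^ (n - l))) (Cmul (S2w m l (Cscale (/ rho) y)) (qpolyC l rho q k y)))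
  = RtoC (rho ^ n * ((/ rho) ^ m * / qnum q (S m) ^ k)).
Proof.
  intro Hm.
  transitivity (Cmul (RtoC (rho ^ n)) (Csum n (fun l => Cmul (S2w m l (Cscale (/ rho) y))
       (mjint q k (fun P => Cfall (Cscale (/ rho) (Csub (RtoC P) y)) l))))).
  { rewrite <- Csum_mull. apply Csum_ext; intros l Hl. rewrite qpolyC_mj.
    rewrite <- (pow_sub_r rho n l) by auto. rewrite RtoC_mul. ring. }
  rewrite <- (mjint_lin q k n n _ (fun l P => Cfall (Cscale (/ rho) (Csub (RtoC P) y)) l)
     (fun l i => Cmul (RtoC ((-1) ^ l * (- / rho) ^ i)) (S1w l i (Cscale (/ rho) y)))).
  2: auto. 2: { intros; apply C_poly; auto. }
  transitivity (Cmul (RtoC (rho ^ n)) (mjint q k (fun P => RtoC ((/ rho) ^ m * P ^ m)))).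
  { f_equal. f_equal. apply functional_extensionality; intro P.
    rewrite (I2 n m Hm). rewrite <- Rpow_mult_distr, <- Cpow_RtoC. f_equal.
    unfold Cscale, Cmul, Cadd, Csub, RtoC, Copp. apply Cx_eq; simpl; ring. }
  rewrite (mjint_mono q k hq), <- RtoC_mul. reflexivity.
Qed.

Lemma Ypart2 (rho q : R) (k : nat) (y : Cx) (hrho : rho <> 0) (hq : 0 <= q < 1) n m : (m <= n)%nat ->
  Csum n (fun l => Cmul (RtoC (rho ^ (n - l))) (Cmul (S2w m l (Copp (Cscale (/ rho) y))) (qpolyChat l rho q k y)))
  = RtoC (rho ^ n * ((- / rho) ^ m * / qnum q (S m) ^ k)).
Proof.
  intro Hm.
  transitivity (Cmul (RtoC (rho ^ n)) (Csum n (fun l => Cmul (S2w m l (Copp (Cscale (/ rho) y)))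
       (mjint q k (fun P => Cfall (Cscale (/ rho) (Csub y (RtoC P))) l))))).
  { rewrite <- Csum_mull. apply Csum_ext; intros l Hl. rewrite qpolyChat_mj.
    rewrite <- (pow_sub_r rho n l) by auto. rewrite RtoC_mul. ring. }
  rewrite <- (mjint_lin q k n n _ (fun l P => Cfall (Cscale (/ rho) (Csub y (RtoC P))) l)
     (fun l i => Cmul (RtoC ((-1) ^ l * (/ rho) ^ i)) (S1w l i (Copp (Cscale (/ rho) y))))).
  2: auto. 2: { intros; apply Chat_poly; auto. }
  transitivity (Cmul (RtoC (rho ^ n)) (mjint q k (fun P => RtoC ((- / rho) ^ m * P ^ m)))).
  { f_equal. f_equal. apply functional_extensionality; intro P.
    rewrite (I2 n m Hm). rewrite <- Rpow_mult_distr, <- Cpow_RtoC. f_equal.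
    unfold Cscale, Cmul, Cadd, Csub, RtoC, Copp. apply Cx_eq; simpl; ring. }
  rewrite (mjint_mono q k hq), <- RtoC_mul. reflexivity.
Qed.

Lemma Ypart3 (rho q : R) (k : nat) (y : Cx) (hrho : rho <> 0) (hq : 0 <= q < 1) n m : (m <= n)%nat ->
  Csum n (fun l => Cmul (RtoC (rho ^ (n - l))) (Cmul (S1w m l (Cscale (/ rho) y)) (qpolyB l rho q k y)))
  = RtoC (rho ^ n * ((/ rho) ^ m * INR (fact m) * / qnum q (S m) ^ k)).
Proof.
  intro Hm. set (w := Cscale (/ rho) y).
  transitivity (Csum n (fun l => Csum n (fun j =>
     Cmul (RtoC (rho ^ n * (/ qnum q (S j) ^ k * (- / rho) ^ j * INR (fact j))))
          (Cmul (Cmul (RtoC ((-1) ^ l)) (S1w m l w)) (S2w l j w))))).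
  { apply Csum_ext; intros l Hl. rewrite B_expand by auto.
    rewrite (Csum_extend l n (fun j => Cmul (RtoC (rho ^ n * (/ qnum q (S j) ^ k * (- / rho) ^ j * INR (fact j))))
          (Cmul (Cmul (RtoC ((-1) ^ l)) (S1w m l w)) (S2w l j w)))) by (auto || (intros; rewrite S2w_low by lia; ring)).
    rewrite <- !Csum_mull. apply Csum_ext; intros j Hj. fold w.
    replace ((- rho) ^ l) with ((-1) ^ l * rho ^ l) by (rewrite <- Rpow_mult_distr; f_equal; ring).
    rewrite <- (pow_sub_r rho n l) by auto. rewrite !RtoC_mul. ring. }
  rewrite Csum_swap.
  transitivity (Csum n (fun j => Cmul (RtoC (rho ^ n * (/ qnum q (S j) ^ k * (- / rho) ^ j * INR (fact j))))
      (Tsum n m j w))).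
  { apply Csum_ext; intros. unfold Tsum. rewrite Csum_mull. reflexivity. }
  transitivity (Csum n (fun j => if Nat.eqb j m then
       Cmul (RtoC (rho ^ n * (/ qnum q (S j) ^ k * (- / rho) ^ j * INR (fact j)))) (RtoC ((-1) ^ j)) else C0)).
  { apply Csum_ext; intros j Hj. rewrite Torth by lia. rewrite Nat.eqb_sym.
    destruct (Nat.eqb j m); ring. }
  rewrite Csum_delta by lia. rewrite <- RtoC_mul. f_equal.
  replace ((- / rho) ^ m) with ((-1) ^ m * (/ rho) ^ m) by (rewrite <- Rpow_mult_distr; f_equal; ring).
  assert (Hs: (-1) ^ m * (-1) ^ m = 1).
  { rewrite <- Rpow_mult_distr. replace (-1 * -1) with 1 by ring. apply pow1. }
  transitivity (rho ^ n * (/ qnum q (S m) ^ k * (/ rho) ^ m * INR (fact m)) * ((-1) ^ m * (-1) ^ m)).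
  ring. rewrite Hs. ring.
Qed.

Lemma negpow r m : (- r) ^ m = (-1) ^ m * r ^ m.
Proof. rewrite <- Rpow_mult_distr. f_equal. ring. Qed.
Lemma m1sq m : (-1) ^ m * (-1) ^ m = 1.
Proof. rewrite <- Rpow_mult_distr. replace (-1 * -1) with 1 by ring. apply pow1. Qed.

Lemma qnum_nz q m k : 0 <= q < 1 -> qnum q (S m) ^ k <> 0.
Proof.
  intro Hq. apply pow_nonzero. unfold qnum. pose proof (qpow_lt q m Hq).
  apply Rmult_integral_contrapositive_currified; [lra|]. apply Rinv_neq_0_compat; lra.
Qed.

Theorem theorem8 (n k : nat) (rho q : R) (x y : Cx)
  (hk : (1 <= k)%nat) (hrho : rho <> 0) (hq : 0 <= q < 1) :
  qpolyB n rho q k x =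
    Csum n (fun l => Csum n (fun m =>
      Cscale ((-1) ^ (n - m) * INR (fact m) * rho ^ (n - l))
        (Cmul (Cmul (S2w n m (Cscale (/ rho) x)) (S2w m l (Cscale (/ rho) y)))
              (qpolyC l rho q k y))))
  /\
  qpolyB n rho q k x =
    Csum n (fun l => Csum n (fun m =>
      Cscale ((-1) ^ n * INR (fact m) * rho ^ (n - l))
        (Cmul (Cmul (S2w n m (Cscale (/ rho) x)) (S2w m l (Copp (Cscale (/ rho) y))))
              (qpolyChat l rho q k y))))
  /\
  qpolyC n rho q k x =
    Csum n (fun l => Csum n (fun m =>
      Cscale ((-1) ^ (n - m) / INR (fact m) * rho ^ (n - l))
        (Cmul (Cmul (S1w n m (Cscale (/ rho) x)) (S1w m l (Cscale (/ rho) y)))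
              (qpolyB l rho q k y))))
  /\
  qpolyChat n rho q k x =
    Csum n (fun l => Csum n (fun m =>
      Cscale ((-1) ^ n / INR (fact m) * rho ^ (n - l))
        (Cmul (Cmul (S1w n m (Copp (Cscale (/ rho) x))) (S1w m l (Cscale (/ rho) y)))
              (qpolyB l rho q k y)))).
Proof.
  split; [|split; [|split]]; rewrite Csum_swap.
  - rewrite B_expand by auto. apply Csum_ext; intros m Hm.
    transitivity (Cmul (RtoC ((-1) ^ (n - m) * INR (fact m))) (Cmul (S2w n m (Cscale (/ rho) x))
      (Csum n (fun l => Cmul (RtoC (rho ^ (n - l))) (Cmul (S2w m l (Cscale (/ rho) y)) (qpolyC l rho q k y)))))).
    2: { rewrite <- !Csum_mull. apply Csum_ext; intros. unfold Cscale. rewrite !RtoC_mul. ring. }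
    rewrite Ypart1 by auto.
    replace (/ qnum q (S m) ^ k * ((- / rho) ^ m * (- rho) ^ n) * INR (fact m)) with
      ((-1) ^ (n - m) * INR (fact m) * (rho ^ n * ((/ rho) ^ m * / qnum q (S m) ^ k))).
    rewrite !RtoC_mul. ring.
    rewrite pow_sub_m1 by auto. rewrite !negpow.
    ring.
  - rewrite B_expand by auto. apply Csum_ext; intros m Hm.
    transitivity (Cmul (RtoC ((-1) ^ n * INR (fact m))) (Cmul (S2w n m (Cscale (/ rho) x))
      (Csum n (fun l => Cmul (RtoC (rho ^ (n - l))) (Cmul (S2w m l (Copp (Cscale (/ rho) y))) (qpolyChat l rho q k y)))))).
    2: { rewrite <- !Csum_mull. apply Csum_ext; intros. unfold Cscale. rewrite !RtoC_mul. ring. }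
    rewrite Ypart2 by auto.
    replace (/ qnum q (S m) ^ k * ((- / rho) ^ m * (- rho) ^ n) * INR (fact m)) with
      ((-1) ^ n * INR (fact m) * (rho ^ n * ((- / rho) ^ m * / qnum q (S m) ^ k))).
    rewrite !RtoC_mul. ring.
    rewrite (negpow rho). ring.
  - rewrite C_expand by auto. apply Csum_ext; intros m Hm.
    transitivity (Cmul (RtoC ((-1) ^ (n - m) / INR (fact m))) (Cmul (S1w n m (Cscale (/ rho) x))
      (Csum n (fun l => Cmul (RtoC (rho ^ (n - l))) (Cmul (S1w m l (Cscale (/ rho) y)) (qpolyB l rho q k y)))))).
    2: { rewrite <- !Csum_mull. apply Csum_ext; intros. unfold Cscale. rewrite !RtoC_mul. ring. }
    rewrite Ypart3 by auto.
    replace (rho ^ n * ((-1) ^ n * (- / rho) ^ m) * / qnum q (S m) ^ k) with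
      ((-1) ^ (n - m) / INR (fact m) * (rho ^ n * ((/ rho) ^ m * INR (fact m) * / qnum q (S m) ^ k))).
    rewrite !RtoC_mul. ring.
    rewrite pow_sub_m1 by auto. rewrite (negpow (/ rho)).
    field. split; [apply qnum_nz; auto | apply fact_neq].
  - rewrite Chat_expand by auto. apply Csum_ext; intros m Hm.
    transitivity (Cmul (RtoC ((-1) ^ n / INR (fact m))) (Cmul (S1w n m (Copp (Cscale (/ rho) x)))
      (Csum n (fun l => Cmul (RtoC (rho ^ (n - l))) (Cmul (S1w m l (Cscale (/ rho) y)) (qpolyB l rho q k y)))))).
    2: { rewrite <- !Csum_mull. apply Csum_ext; intros. unfold Cscale. rewrite !RtoC_mul. ring. }
    rewrite Ypart3 by auto.
    replace (rho ^ n * ((-1) ^ n * (/ rho) ^ m) * / qnum q (S m) ^ k) with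
      ((-1) ^ n / INR (fact m) * (rho ^ n * ((/ rho) ^ m * INR (fact m) * / qnum q (S m) ^ k))).
    rewrite !RtoC_mul. ring.
    field. split; [apply qnum_nz; auto | apply fact_neq].
Qed.
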